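(* Fix $t\in[T]$ and suppose $\|\theta^*\|_2\le L_\theta$ and $\|\widehat\theta_t-\theta^*\|_{\Sigma_t}\le\beta_t$. Let $p^*\in\mathbb{R}^{\mathcal{S}\times\mathcal{A}\times\mathcal{S}}$ be given by $p^*_{s,a,s'}=p(s'\mid s,a,\theta^* )$. Then $p^*\in\mathcal{P}_t$, where $\mathcal{P}_t$ is the set of $p\in[0,1]^{\mathcal{S}\times\mathcal{A}\times\mathcal{S}}$ such that for all $(s,a)\in\mathcal{S}\times\mathcal{A}$: $\sum_{s'\in\mathcal{S}_{s,a}}p_{s,a,s'}=1$ and $\sum_{s'\in\mathcal{S}_{s,a}}|p_{s,a,s'}-p(s'\mid s,a,\widehat\theta_t)|\le B^{1,t}_{s,a}+B^{2,t}_{s,a}$, with $B^{1,t}_{s,a}=\beta_t\sum_{s'\in\mathcal{S}_{s,a}}p(s'\mid s,a,\widehat\theta_t)\big\|\varphi(s,a,s')-\sum_{s''\in\mathcal{S}_{s,a}}p(s''\mid s,a,\widehat\theta_t)\varphi(s,a,s'')\big\|_{\Sigma_t^{-1}}$ and $B^{2,t}_{s,a}=3\beta_t^2\max_{s'\in\mathcal{S}_{s,a}}\|\varphi(s,a,s')\|_{\Sigma_t^{-1}}^2$.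
   Context: MNL model: finite $\mathcal{S},\mathcal{A}$; known reachable sets $\mathcal{S}_{s,a}$ and features $\varphi(s,a,s')\in\mathbb{R}^d$; $p(s'\mid s,a,\theta)=\exp(\varphi(s,a,s')^\top\theta)/\sum_{s''\in\mathcal{S}_{s,a}}\exp(\varphi(s,a,s'')^\top\theta)$ for $s'\in\mathcal{S}_{s,a}$, $0$ otherwise; $\theta^*$ is the unknown true parameter. $\widehat\theta_t\in\mathbb{R}^d$ is the online estimate and $\Sigma_t$ the positive definite matrix $\Sigma_t=\lambda I_d+\sum_{i<t}\nabla^2\ell_i(\widehat\theta_{i+1})$ ($\lambda>0$) produced by the online Newton-type estimator on the observed trajectory (with $\ell_i$ the multinomial log-loss of step $i$); $\beta_t>0$ is the confidence radius (in the paper $\beta_t=f(L_\theta,L_\varphi)\sqrt d(\log(\mathcal{U}t/\delta))^2$ for a polynomial $f$). $\|x\|_A=\sqrt{x^\top Ax}$. *)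

(* Defs.v *)
From HB Require Import structures.
From mathcomp Require Import all_boot all_order all_algebra.
From mathcomp Require Import reals.
From mathcomp Require Import sequences.
From mathcomp.analysis Require Import exp.
Set Implicit Arguments. Unset Strict Implicit. Unset Printing Implicit Defensive.
Import Order.TTheory GRing.Theory Num.Theory.
Local Open Scope ring_scope.

Section MNL.
Variables (R : realType) (S A : finType) (d : nat).

Definition vdot (u v : 'cV[R]_d) : R := (u^T *m v) 0 0.

Definition mnorm (M : 'M[R]_d) (x : 'cV[R]_d) : R :=
  Num.sqrt ((x^T *m M *m x) 0 0).

Definition norm2 (x : 'cV[R]_d) : R := Num.sqrt (vdot x x).

Definition posdef (M : 'M[R]_d) : Prop :=
  M^T = M /\ forall x : 'cV[R]_d, x != 0 -> 0 < (x^T *m M *m x) 0 0.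

Variables (Sr : S -> A -> {set S}) (phi : S -> A -> S -> 'cV[R]_d).

Definition mnl_p (theta : 'cV[R]_d) (s : S) (a : A) (s' : S) : R :=
  if s' \in Sr s a then
    expR (vdot (phi s a s') theta) /
    \sum_(s'' in Sr s a) expR (vdot (phi s a s'') theta)
  else 0.

Definition bonus1 (beta : R) (Sigma : 'M[R]_d) (th : 'cV[R]_d) (s : S) (a : A) : R :=
  beta * \sum_(s' in Sr s a)
    mnl_p th s a s' *
    mnorm (invmx Sigma)
      (phi s a s' - \sum_(s'' in Sr s a) mnl_p th s a s'' *: phi s a s'').

Definition bonus2 (beta : R) (Sigma : 'M[R]_d) (s : S) (a : A) : R :=
  3 * beta ^+ 2 *
  \big[Num.max/0]_(s' in Sr s a) (mnorm (invmx Sigma) (phi s a s') ^+ 2).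

Definition conf_set (beta : R) (Sigma : 'M[R]_d) (th : 'cV[R]_d)
  (p : S -> A -> S -> R) : Prop :=
  (forall s a s', 0 <= p s a s' <= 1) /\
  forall s a,
    \sum_(s' in Sr s a) p s a s' = 1 /\
    \sum_(s' in Sr s a) `|p s a s' - mnl_p th s a s'|
      <= bonus1 beta Sigma th s a + bonus2 beta Sigma s a.

End MNL.

(* Main.v *)
Require Import Defs.
From HB Require Import structures.
From mathcomp Require Import all_boot all_order all_algebra.
From mathcomp Require Import reals.
From mathcomp Require Import sequences.
From mathcomp.analysis Require Import exp.
From mathcomp Require Import ring lra.
Import Order.TTheory GRing.Theory Num.Theory.
Local Open Scope ring_scope.

Section ExpB.
Variable R : realType.
Implicit Types x : R.

Lemma expR_le_inv x : x < 1 -> expR x <= (1 - x)^-1.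
Proof.
move=> hx.
have h1 := expR_ge1Dx (- x).
have hp : 0 < 1 - x by lra.
rewrite -[expR x]invrK -expRN lef_pV2 ?posrE ?expR_gt0 //; lra.
Qed.

Definition rem x := expR x - 1 - x.

Lemma rem_ge0 x : 0 <= rem x.
Proof. rewrite /rem; have := expR_ge1Dx x; lra. Qed.

Lemma rem_lvl0 x : `|x| <= 5/24 -> rem x <= 13/10 * x^+2.
Proof.
move=> hx.
have hx' : x <= 5/24 by move: hx; rewrite ler_norml => /andP[].
have hx'' : - (5/24) <= x by move: hx; rewrite ler_norml => /andP[].
have hp : 0 < 1 - x by lra.
have := @expR_le_inv x ltac:(lra).
rewrite /rem => h.
have : (1 - x)^-1 - 1 - x = x^+2 / (1 - x).
  by field; rewrite gt_eqF.
move=> E.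
suff : x^+2 / (1 - x) <= 13/10 * x^+2 by lra.
rewrite ler_pdivrMr // .
have : 0 <= x^+2 by rewrite sqr_ge0.
nra.
Qed.

Lemma rem_double b c c' : 0 <= b <= 1 -> 0 <= c ->
  1 + 2 * c * (1 + b) + c^+2 * b^+2 <= 4 * c' ->
  (forall x, `|x| <= b -> rem x <= c * x^+2) ->
  forall x, `|x| <= 2 * b -> rem x <= c' * x^+2.
Proof.
move=> hb hc hcc H x hx.
set y := x / 2.
have hxy : x = y + y by rewrite /y; field.
have hy : `|y| <= b.
  rewrite /y normrM [`|2^-1|]ger0_norm ?invr_ge0 //; lra.
have Hy := H y hy.
have Hy0 := rem_ge0 y.
have E : rem x = y^+2 + 2 * rem y * (1 + y) + rem y ^+2.
  rewrite /rem hxy expRD; ring.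
have hy1 : -b <= y <= b by rewrite -ler_norml.
have hy2 : y^+2 <= b^+2 by nra.
rewrite E hxy.
have h3 : rem y ^+ 2 <= c^+2 * b^+2 * y^+2.
  have h3a : rem y ^+2 <= (c * y^+2)^+2.
    have : 0 <= c * y^+2 by rewrite mulr_ge0 // sqr_ge0.
    nra.
  apply: (le_trans h3a).
  have -> : (c * y^+2)^+2 = (c^+2 * y^+2) * y^+2 by ring.
  have -> : c^+2 * b^+2 * y^+2 = (c^+2 * y^+2) * b^+2 by ring.
  by rewrite ler_wpM2l // mulr_ge0 // sqr_ge0.
have h2 : 2 * rem y * (1 + y) <= 2 * c * (1 + b) * y^+2.
  have : 0 <= 1 + y by lra.
  have : 0 <= y^+2 by rewrite sqr_ge0.
  nra.
have : 0 <= y^+2 by rewrite sqr_ge0.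
nra.
Qed.

Lemma rem_bound x : `|x| <= 5/3 -> rem x <= 3/2 * x^+2.
Proof.
have L1 := @rem_double (5/24) (13/10) (11/10) ltac:(lra) ltac:(lra) ltac:(lra) rem_lvl0.
have L2 := @rem_double (5/12) (11/10) (11/10) ltac:(lra) ltac:(lra) ltac:(lra)
  (fun x h => L1 x ltac:(lra)).
have L3 := @rem_double (5/6) (11/10) (3/2) ltac:(lra) ltac:(lra) ltac:(lra)
  (fun x h => L2 x ltac:(lra)).
move=> hx; apply: L3; lra.
Qed.
End ExpB.
Lemma core (R : realType) (I : finType) (J : {set I}) (q v : I -> R) :
  (forall i, i \in J -> 0 <= q i) -> \sum_(i in J) q i = 1 ->
  \sum_(i in J) q i * v i = 0 ->
  \sum_(i in J) `|q i * expR (v i) / (\sum_(j in J) q j * expR (v j)) - q i|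
  <= \sum_(i in J) q i * `|v i| + 2 * \sum_(i in J) q i * (expR (v i) - 1 - v i).
Proof.
move=> hq hs hv.
set r := fun i => expR (v i) - 1 - v i.
have hr : forall i, 0 <= r i by move=> i; rewrite /r; have := expR_ge1Dx (v i); lra.
set rb := \sum_(i in J) q i * r i.
have hrb : 0 <= rb by rewrite /rb sumr_ge0 // => i hi; rewrite mulr_ge0 // hq.
set W := \sum_(j in J) q j * expR (v j).
have EW : W = 1 + rb.
  rewrite /W /rb.
  have -> : \sum_(j in J) q j * expR (v j) = \sum_(j in J) (q j + q j * v j + q j * r j).
    by apply: eq_bigr => j _; rewrite /r; ring.
  by rewrite !big_split /= hs hv addr0.
have W1 : 1 <= W by lra.
have W0 : 0 < W by lra.
rewrite -/W.
apply: (@le_trans _ _ (\sum_(i in J) (q i * `|v i| + q i * r i + q i * rb))).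
  apply: ler_sum => i hi.
  have -> : q i * expR (v i) / W - q i = q i * (v i + r i - rb) / W.
    by rewrite /r EW; field; lra.
  rewrite normrM normfV (ger0_norm (ltW W0)) normrM (ger0_norm (hq i hi)).
  have h1 : `|v i + r i - rb| <= `|v i| + r i + rb.
    have := ler_normB (v i + r i) rb.
    have := ler_normD (v i) (r i).
    rewrite (ger0_norm (hr i)) (ger0_norm hrb); lra.
  rewrite ler_pdivrMr //.
  have hqi := hq i hi.
  have hn := normr_ge0 (v i).
  have hri := hr i.
  have e1 : q i * `|v i + r i - rb| <= q i * (`|v i| + r i + rb) by rewrite ler_wpM2l.
  have e2 : 0 <= q i * (`|v i| + r i + rb) by rewrite mulr_ge0 //; lra.
  have e3 : q i * (`|v i| + r i + rb) <= q i * (`|v i| + r i + rb) * W.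
    by rewrite ler_peMr.
  have -> : (q i * `|v i| + q i * r i + q i * rb) = q i * (`|v i| + r i + rb) by ring.
  lra.
rewrite !big_split /= -big_distrl /= hs mul1r /rb; lra.
Qed.
Section CS.
Variables (R : realType) (d : nat).
Definition Bf (M : 'M[R]_d) (a b : 'cV[R]_d) : R := (a^T *m M *m b) 0 0.

Lemma Bf_sym M a b : M^T = M -> Bf M a b = Bf M b a.
Proof.
move=> hM; rewrite /Bf -[in LHS](trmxK (a^T *m M *m b)) mxE.
by rewrite !trmx_mul trmxK hM mulmxA.
Qed.

Lemma Bf_exp M a b t :
  Bf M (b - t *: a) (b - t *: a) = Bf M b b - t * Bf M a b - t * Bf M b a + t^+2 * Bf M a a.
Proof.
rewrite /Bf !linearB /= !linearZ /= !scalerN !mulmxDl !mulNmx -!scalemxAl.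
rewrite !mxE; ring.
Qed.

Lemma posdef_unit (M : 'M[R]_d) : posdef M -> M \in unitmx.
Proof.
move=> [hs hp]; rewrite unitmxE unitfE; apply/negP => /det0P [v hv hvM].
have : v^T != 0 by apply: contra hv => /eqP h; rewrite -[v]trmxK h linear0.
move/hp; rewrite trmxK hvM mul0mx mxE ltxx //.
Qed.

Lemma Bf_CS (M : 'M[R]_d) a b : posdef M -> (Bf M a b)^+2 <= Bf M a a * Bf M b b.
Proof.
move=> hM; have [hs hp] := hM.
have [->|na] := eqVneq a 0.
  by rewrite /Bf trmx0 !mul0mx mxE expr0n mul0r.
have ha := hp a na.
have := Bf_exp M a b (Bf M a b / Bf M a a).
have hbb : 0 <= Bf M (b - Bf M a b / Bf M a a *: a) (b - Bf M a b / Bf M a a *: a).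
  set c := b - _ *: a; have [->|nc] := eqVneq c 0.
    by rewrite /Bf trmx0 !mul0mx mxE.
  exact: ltW (hp c nc).
rewrite (Bf_sym M b a hs) => E; rewrite E in hbb.
move: hbb; rewrite -/(Bf M a a) in ha *.
set A := Bf M a a; set X := Bf M a b; set Y := Bf M b b => h.
have : 0 <= A * (Y - X / A * X - X / A * X + (X / A) ^+ 2 * A).
  by rewrite mulr_ge0 // ltW.
have -> : A * (Y - X / A * X - X / A * X + (X / A) ^+ 2 * A) = A * Y - X^+2.
  by field; rewrite gt_eqF.
lra.
Qed.

Lemma vdot_CS (M : 'M[R]_d) (x y : 'cV[R]_d) : posdef M ->
  `|vdot x y| <= mnorm (invmx M) x * mnorm M y.
Proof.
move=> hM; have [hs hp] := hM; have hu := posdef_unit M hM.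
set a := invmx M *m x.
have E1 : vdot x y = Bf M a y.
  by rewrite /Bf /vdot /a trmx_mul trmx_inv hs -!mulmxA (mulmxA (invmx M)) mulVmx // mul1mx.
have E2 : (x^T *m invmx M *m x) 0 0 = Bf M a a.
  by rewrite /Bf /a trmx_mul trmx_inv hs -!mulmxA (mulmxA M) mulmxV // mul1mx.
have hpos : forall z, 0 <= Bf M z z.
  move=> z; have [->|nz] := eqVneq z 0; first by rewrite /Bf trmx0 !mul0mx mxE.
  exact: ltW (hp z nz).
rewrite /mnorm E1 E2 -(sqrtrM _ (hpos a)) -(sqrtr_sqr (Bf M a y)).
rewrite ler_sqrt ?mulr_ge0 //; [exact: (Bf_CS M a y hM) | exact: (hpos y)].
Qed.
End CS.

Section Lin.
Variables (R : realType) (d : nat).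
Implicit Types x y z : 'cV[R]_d.
Lemma vdotBr x y z : vdot x (y - z) = vdot x y - vdot x z.
Proof. by rewrite /vdot mulmxBr !mxE. Qed.
Lemma vdotBl x y z : vdot (x - y) z = vdot x z - vdot y z.
Proof. by rewrite /vdot linearB /= mulmxBl !mxE. Qed.
Lemma vdot_suml (I : finType) (J : {set I}) (c : I -> R) (f : I -> 'cV[R]_d) z :
  vdot (\sum_(j in J) c j *: f j) z = \sum_(j in J) c j * vdot (f j) z.
Proof.
rewrite /vdot linear_sum /= mulmx_suml summxE; apply: eq_bigr => j _.
by rewrite linearZ /= -scalemxAl mxE.
Qed.
Lemma mnorm_ge0 (M : 'M[R]_d) x : 0 <= mnorm M x.
Proof. exact: sqrtr_ge0. Qed.
End Lin.

Section Main.
Variables (R : realType) (S A : finType) (d : nat)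
  (Sr : S -> A -> {set S}) (phi : S -> A -> S -> 'cV[R]_d).

Definition Zs (th : 'cV[R]_d) s a := \sum_(s'' in Sr s a) expR (vdot (phi s a s'') th).
Arguments Zs : clear implicits.

Lemma Zs_gt0 th s a : Sr s a != set0 -> 0 < Zs th s a.
Proof.
case/set0Pn => i hi; rewrite /Zs (bigD1 i) //=.
rewrite ltr_wpDr ?expR_gt0 // sumr_ge0 // => j _; exact: expR_ge0.
Qed.

Lemma mnl_in th s a i : i \in Sr s a ->
  mnl_p Sr phi th s a i = expR (vdot (phi s a i) th) / Zs th s a.
Proof. by rewrite /mnl_p => ->. Qed.

Lemma mnl_sum th s a : Sr s a != set0 -> \sum_(i in Sr s a) mnl_p Sr phi th s a i = 1.
Proof.
move=> ne; rewrite (eq_bigr (fun i => expR (vdot (phi s a i) th) / Zs th s a)).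
  by rewrite -big_distrl /= -/(Zs th s a) mulfV // gt_eqF // Zs_gt0.
by move=> i hi; rewrite mnl_in.
Qed.

Lemma mnl_ge0 th s a i : 0 <= mnl_p Sr phi th s a i.
Proof.
rewrite /mnl_p; case: ifP => // hi.
rewrite divr_ge0 ?expR_ge0 // sumr_ge0 // => j _; exact: expR_ge0.
Qed.

Lemma mnl_le1 th s a i : mnl_p Sr phi th s a i <= 1.
Proof.
rewrite /mnl_p; case: ifPn => hi //.
have hZ : 0 < Zs th s a by apply: Zs_gt0; apply/set0Pn; exists i.
rewrite -/(Zs th s a) ler_pdivrMr // mul1r /Zs (bigD1 i) //=.
rewrite lerDl sumr_ge0 // => j _; exact: expR_ge0.
Qed.
End Main.
Arguments Zs {R S A d} Sr phi th s a.

Theorem lemma2 (R : realType) (S A : finType) (d : nat)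
  (Sr : S -> A -> {set S}) (phi : S -> A -> S -> 'cV[R]_d)
  (Sr_nonempty : forall s a, Sr s a != set0)
  (theta_star theta_hat : 'cV[R]_d) (Sigma : 'M[R]_d) (L_theta beta : R)
  (Hbeta : 0 < beta) (HSigma : posdef Sigma)
  (Hnorm : norm2 theta_star <= L_theta)
  (Hconf : mnorm Sigma (theta_hat - theta_star) <= beta) :
  conf_set Sr phi beta Sigma theta_hat (fun s a s' => mnl_p Sr phi theta_star s a s').
Proof.
split.
  by move=> s a s'; apply/andP; split; [apply: mnl_ge0 | apply: mnl_le1].
move=> s a; split; first exact: mnl_sum.
pose J := Sr s a.
pose ph i := mnl_p Sr phi theta_hat s a i.
pose ps i := mnl_p Sr phi theta_star s a i.
pose D := theta_star - theta_hat.
pose u i := vdot (phi s a i) D.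
pose ub := \sum_(j in J) ph j * u j.
pose v i := u i - ub.
pose Mx := \big[Num.max/0]_(s' in J) (mnorm (invmx Sigma) (phi s a s') ^+ 2).
pose K := beta ^+ 2 * Mx.
have hph0 : forall i, 0 <= ph i by move=> i; apply: mnl_ge0.
have hphs : \sum_(i in J) ph i = 1 by apply: mnl_sum.
have hpss : \sum_(i in J) ps i = 1 by apply: mnl_sum.
have habs : forall x, `|vdot x D| <= mnorm (invmx Sigma) x * beta.
  move=> x; have -> : vdot x D = - vdot x (theta_hat - theta_star).
    by rewrite /D !vdotBr opprB.
  rewrite normrN; apply: (le_trans (@vdot_CS _ _ Sigma _ _ HSigma)).
  by rewrite ler_wpM2l // mnorm_ge0.
have hu : forall i, i \in J -> u i ^+ 2 <= K.
  move=> i hi; have h := habs (phi s a i).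
  have h0 := normr_ge0 (u i).
  have hm : mnorm (invmx Sigma) (phi s a i) ^+ 2 <= Mx.
    exact: (le_bigmax_cond 0 (fun s' => mnorm (invmx Sigma) (phi s a s') ^+ 2) hi).
  rewrite -real_normK ?num_real // /K.
  have h' : `|u i| <= mnorm (invmx Sigma) (phi s a i) * beta := h.
  have hm0 : 0 <= mnorm (invmx Sigma) (phi s a i) by apply: mnorm_ge0.
  have e1 : `|u i|^+2 <= (mnorm (invmx Sigma) (phi s a i) * beta)^+2.
    have : 0 <= mnorm (invmx Sigma) (phi s a i) * beta by rewrite mulr_ge0 // ltW.
    nra.
  have e2 : (mnorm (invmx Sigma) (phi s a i) * beta)^+2 <= beta^+2 * Mx.
    by rewrite exprMn mulrC ler_wpM2l ?sqr_ge0.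
  lra.
have hvabs : forall i, `|v i| <= beta * mnorm (invmx Sigma)
      (phi s a i - \sum_(s'' in Sr s a) mnl_p Sr phi theta_hat s a s'' *: phi s a s'').
  move=> i; rewrite mulrC; apply: le_trans (habs _).
  by rewrite vdotBl vdot_suml.
have hWk : forall j, j \in J -> ph j * expR (v j) =
    expR (vdot (phi s a j) theta_star) * (expR (- ub) / Zs Sr phi theta_hat s a).
  move=> j hj; rewrite /ph mnl_in // /v expRD.
  have -> : vdot (phi s a j) theta_star = vdot (phi s a j) theta_hat + u j.
    by rewrite /u /D vdotBr addrC subrK.
  rewrite expRD; field.
  by rewrite gt_eqF // Zs_gt0.
pose k := expR (- ub) / Zs Sr phi theta_hat s a.
have hk : 0 < k by rewrite divr_gt0 ?expR_gt0 // Zs_gt0.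
have hW : \sum_(j in J) ph j * expR (v j) = Zs Sr phi theta_star s a * k.
  by rewrite (eq_bigr _ hWk) -big_distrl.
have hps : forall i, i \in J -> ps i = ph i * expR (v i) / \sum_(j in J) ph j * expR (v j).
  move=> i hi; rewrite hW hWk // /ps mnl_in //.
  rewrite /k; field; rewrite ?expR_eq0 ?gt_eqF ?Zs_gt0 //.
have -> : \sum_(s' in Sr s a) `|mnl_p Sr phi theta_star s a s' - mnl_p Sr phi theta_hat s a s'|
  = \sum_(i in J) `|ph i * expR (v i) / \sum_(j in J) ph j * expR (v j) - ph i|.
  by apply: eq_bigr => i hi; rewrite -hps.
have hb1 : \sum_(i in J) ph i * `|v i| <= bonus1 Sr phi beta Sigma theta_hat s a.
  rewrite /bonus1 mulr_sumr; apply: ler_sum => i hi.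
  rewrite mulrCA ler_wpM2l //.
have hb1' : 0 <= bonus1 Sr phi beta Sigma theta_hat s a.
  apply: le_trans hb1; apply: sumr_ge0 => i _; rewrite mulr_ge0 //.
have hb2 : bonus2 Sr phi beta Sigma s a = 3 * K by rewrite /bonus2 /K mulrA.
have hvsum : \sum_(i in J) ph i * v i = 0.
  rewrite /v (eq_bigr (fun i => ph i * u i - ub * ph i)); last by move=> i _; ring.
  by rewrite sumrB -mulr_sumr hphs mulr1 subrr.
have hK2 : \sum_(i in J) ph i * u i ^+ 2 <= K.
  apply: (le_trans (y := \sum_(i in J) ph i * K)).
    by apply: ler_sum => i hi; rewrite ler_wpM2l // hu.
  by rewrite -big_distrl /= hphs mul1r.
have hvar : \sum_(i in J) ph i * v i ^+ 2 = \sum_(i in J) ph i * u i ^+ 2 - ub ^+ 2.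
  rewrite /v (eq_bigr (fun i => ph i * u i ^+ 2 - (2 * ub) * (ph i * u i) + ub^+2 * ph i)).
    by rewrite big_split sumrB /= -!mulr_sumr hphs -/ub; ring.
  by move=> i _; ring.
have hv2 : \sum_(i in J) ph i * v i ^+ 2 <= K.
  have : 0 <= ub ^+ 2 by rewrite sqr_ge0.
  lra.
have hub : ub ^+ 2 <= K.
  have : 0 <= \sum_(i in J) ph i * v i ^+ 2.
    by apply: sumr_ge0 => i _; rewrite mulr_ge0 ?sqr_ge0.
  lra.
have [big|small] := lerP 2 (3 * K).
  apply: (le_trans (y := \sum_(i in J) (ps i + ph i))).
    apply: ler_sum => i hi; rewrite -hps //.
    apply: (le_trans (ler_normB _ _)).
    by rewrite !ger0_norm //; apply: mnl_ge0.
  rewrite big_split /= hphs hpss hb2; lra.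
have hc := @core R S J ph v (fun i _ => hph0 i) hphs hvsum.
apply: (le_trans hc).
rewrite hb2.
have hr : \sum_(i in J) ph i * (expR (v i) - 1 - v i) <= 3/2 * \sum_(i in J) ph i * v i ^+ 2.
  rewrite mulr_sumr; apply: ler_sum => i hi.
  rewrite mulrCA ler_wpM2l //.
  apply: rem_bound.
  have h1 := hu i hi.
  have hv : v i ^+ 2 <= 25 / 9.
    have : v i ^+ 2 <= 2 * u i ^+ 2 + 2 * ub ^+ 2.
      have : 0 <= (u i + ub) ^+ 2 by rewrite sqr_ge0.
      rewrite /v; nra.
    lra.
  have hn : `|v i| ^+ 2 = v i ^+ 2 by rewrite real_normK ?num_real.
  have := normr_ge0 (v i).
  nra.
lra.
Qed.
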